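(* Let $d\ge1$, $G\le S_d$, $n\ge 0$. Then $\mathscr{P}^G_n$ is spanned by the tensors $\delta_Q$, where $Q$ ranges over set partitions of $\{1,\dots,n\}$, together with the tensors $T_P(S)$, where $P$ ranges over set partitions of the disjoint union $\{a_1,\dots,a_d\}\sqcup\{b_1,\dots,b_n\}$. Here $\delta_Q=\sum_{\vec j} e_{\vec j}$, summed over $\vec j\in[d]^n$ with $j_s=j_t$ whenever $s,t$ lie in a common block of $Q$, and $T_P(S)=\sum_{\vec j\in[d]^n}\Big(\sum_{\vec k\in[d]^d} S_{\vec k}\,\chi_P(\vec k,\vec j)\Big)e_{\vec j}$, where $\chi_P(\vec k,\vec j)=1$ if the labelling $a_s\mapsto k_s$, $b_t\mapsto j_t$ is constant on each block of $P$, and $\chi_P(\vec k,\vec j)=0$ otherwise. (For $n=0$, $\mathscr{P}^G_0=\mathbb{C}$ and $\delta_\emptyset=1$.)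
   Context: $V=\mathbb{C}^d$ with basis $e_1,\dots,e_d$; $\mathscr{P}_0=\mathbb{C}$, $\mathscr{P}_n=V^{\otimes n}$, $e_{\vec j}=e_{j_1}\otimes\cdots\otimes e_{j_n}$. A subgroup $G\le S_d$ acts by $g\cdot e_i=e_{g(i)}$, diagonally on tensor powers; $\mathscr{P}^G_n$ is the subspace of $G$-fixed vectors in $\mathscr{P}_n$. The molecule is $S=\sum_{g\in G}e_{g(1)}\otimes\cdots\otimes e_{g(d)}=\sum_{\vec k\in[d]^d}S_{\vec k}e_{\vec k}$. *)

(* Defs.v *)
From HB Require Import structures.
From mathcomp Require Import all_boot all_order all_algebra all_fingroup all_field.
Set Implicit Arguments. Unset Strict Implicit. Unset Printing Implicit Defensive.
Import GRing.Theory Num.Theory.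
Local Open Scope ring_scope.

(* Multi-indices j in [d]^n, and tensors in P_n = (C^d)^{(x) n}, given by
   their coordinates in the basis e_j. C is modelled by algC. *)
Definition mindex (d n : nat) := {ffun 'I_n -> 'I_d}.
Definition tensor (d n : nat) := {ffun mindex d n -> algC}.

(* G-fixed tensors: g . (sum_j T_j e_j) = sum_j T_j e_{g o j}, so T is fixed
   iff T_{g o j} = T_j for all g in G and all j. *)
Definition fixed_tensor (d n : nat) (G : {group {perm 'I_d}}) (T : tensor d n) :=
  forall g, g \in G -> forall j : mindex d n, T [ffun i => g (j i)] = T j.

Definition const_on_blocks (X : finType) (Y : eqType) (Q : {set {set X}}) (f : X -> Y) :=
  [forall B in Q, forall s in B, forall t in B, f s == f t].

Definition delta (d n : nat) (Q : {set {set 'I_n}}) : tensor d n :=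
  [ffun j : mindex d n => if const_on_blocks Q j then 1 else 0].

(* The molecule S = sum_{g in G} e_{g(1)} (x) ... (x) e_{g(d)} *)
Definition molecule (d : nat) (G : {group {perm 'I_d}}) : tensor d d :=
  [ffun k : mindex d d => \sum_(g in G) (if [forall i, k i == g i] then 1 else 0)].

Definition labelling (d n : nat) (k : mindex d d) (j : mindex d n)
  (x : ('I_d + 'I_n)%type) : 'I_d :=
  match x with inl s => k s | inr t => j t end.

Definition chi (d n : nat) (P : {set {set ('I_d + 'I_n)%type}})
  (k : mindex d d) (j : mindex d n) : algC :=
  if const_on_blocks P (labelling k j) then 1 else 0.

Definition TP (d n : nat) (P : {set {set ('I_d + 'I_n)%type}}) (S : tensor d d)
  : tensor d n :=
  [ffun j : mindex d n => \sum_(k : mindex d d) S k * chi P k j].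

(* Main.v *)
Require Import Defs.
From HB Require Import structures.
From mathcomp Require Import all_boot all_order all_algebra all_fingroup all_field.
Import GRing.Theory Num.Theory.
Local Open Scope ring_scope.
Set Implicit Arguments. Unset Strict Implicit.

Lemma cob_preim (X : finType) (Y Z : eqType) (f : X -> Y) (L : X -> Z) :
  const_on_blocks (preim_partition f setT) L =
  [forall x, forall y, (f x == f y) ==> (L x == L y)].
Proof.
apply/idP/idP.
- move/forall_inP => H; apply/forallP => x; apply/forallP => y; apply/implyP => e.
  have Bx : [set z in setT | f x == f z] \in preim_partition f setT.
    by apply: imset_f; rewrite inE.
  move: (H _ Bx) => /forall_inP/(_ x).
  rewrite inE eqxx inE => /(_ isT) /forall_inP /(_ y).
  by rewrite inE inE e => /(_ isT).
- move=> H; apply/forall_inP => B /imsetP [z _ ->].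
  apply/forall_inP => s; rewrite inE => /andP[_ es].
  apply/forall_inP => t; rewrite inE => /andP[_ et].
  by have := forallP (forallP H s) t; rewrite -(eqP es) -(eqP et) eqxx.
Qed.

Definition pf d (g : {perm 'I_d}) : mindex d d := [ffun i => g i].
Definition act d n (g : {perm 'I_d}) (j : mindex d n) : mindex d n :=
  [ffun i => g (j i)].
Definition fj d n (j : mindex d n) (x : ('I_d + 'I_n)%type) : 'I_d :=
  match x with inl s => s | inr t => j t end.
Definition Pj d n (j : mindex d n) := preim_partition (fj j) setT.

Lemma chi_Pj d n (j j' : mindex d n) g :
  chi (Pj j) (pf g) j' = if act g j == j' then 1 else 0.
Proof.
rewrite /chi /Pj cob_preim; congr (if _ then _ else _).
apply/forallP/eqP.
- move=> H; apply/ffunP => t; rewrite ffunE.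
  have := forallP (H (inr t)) (inl (j t)); rewrite /= eqxx /= ffunE.
  by move/eqP.
- move=> <- x; apply/forallP => y; apply/implyP => /eqP e.
  have E z : labelling (pf g) (act g j) z = g (fj j z).
    by case: z => z /=; rewrite !ffunE.
  by rewrite !E e.
Qed.

Lemma TP_mol d n (G : {group {perm 'I_d}}) P (j' : mindex d n) :
  TP P (molecule G) j' = \sum_(g in G) chi P (pf g) j'.
Proof.
rewrite ffunE; under eq_bigr do rewrite ffunE big_distrl.
rewrite exchange_big /=; apply: eq_bigr => g _.
have E (k : mindex d d) : [forall i, k i == g i] = (k == pf g).
  apply/forallP/eqP => [H|->] ; last by move=> i; rewrite ffunE.
  by apply/ffunP => i; rewrite ffunE; apply/eqP.
rewrite (bigD1 (pf g)) //= E eqxx mul1r big1 ?addr0 // => k /negbTE nk.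
by rewrite E nk mul0r.
Qed.

Lemma cob_perm (X : finType) d (Q : {set {set X}}) (g : {perm 'I_d}) (L L' : X -> 'I_d) :
  (forall x, L' x = g (L x)) ->
  const_on_blocks Q L' = const_on_blocks Q L.
Proof.
move=> E; apply/forall_inP/forall_inP => H B BQ; have /forall_inP H1 := H B BQ;
apply/forall_inP => s sB; have /forall_inP H2 := H1 s sB;
apply/forall_inP => t tB; have := H2 t tB; by rewrite !E (inj_eq perm_inj).
Qed.

Lemma act_eq d n (g : {perm 'I_d}) (j j' : mindex d n) :
  (act g j == j') = (j == act g^-1 j').
Proof.
apply/eqP/eqP => [<-|->]; apply/ffunP => i; rewrite !ffunE.
  by rewrite permK.
by rewrite permKV.
Qed.

Theorem theorem4p3 (d : nat) (G : {group {perm 'I_d}}) (n : nat) :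
  (0 < d)%N ->
  (* every generator lies in P^G_n *)
  ((forall Q : {set {set 'I_n}}, partition Q [set: 'I_n] ->
      fixed_tensor G (delta d Q)) /\
   (forall P : {set {set ('I_d + 'I_n)%type}}, partition P [set: ('I_d + 'I_n)%type] ->
      fixed_tensor G (TP P (molecule G)))) /\
  (* and every element of P^G_n is a linear combination of them *)
  (forall T : tensor d n, fixed_tensor G T ->
     exists (c : {set {set 'I_n}} -> algC)
            (c' : {set {set ('I_d + 'I_n)%type}} -> algC),
       forall j : mindex d n,
         T j = \sum_(Q | partition Q [set: 'I_n]) c Q * delta d Q j
             + \sum_(P | partition P [set: ('I_d + 'I_n)%type])
                  c' P * TP P (molecule G) j).
Proof.
move=> _; split; first split.
- move=> Q _ g gG j; rewrite !ffunE.
  by rewrite (@cob_perm _ _ _ g j) // => x; rewrite ffunE.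
- move=> P _ g gG j; rewrite !TP_mol.
  rewrite (reindex_inj (mulIg g)) /=.
  apply: eq_big => [h|h _]; first by rewrite groupMr.
  rewrite /chi (@cob_perm _ _ _ g (labelling (pf h) j)) //.
  by case=> x /=; rewrite !ffunE // permM.
move=> T fixT.
exists (fun _ => 0), (fun P => (#|G|%:R)^-1 * \sum_(j | Pj j == P) T j) => j'.
rewrite big1 ?add0r; last by move=> Q _; rewrite mul0r.
have -> : \sum_(P | partition P [set: ('I_d + 'I_n)%type])
    (#|G|%:R)^-1 * (\sum_(j | Pj j == P) T j) * TP P (molecule G) j' =
  (#|G|%:R)^-1 * \sum_(j : mindex d n) T j * TP (Pj j) (molecule G) j'.
  rewrite (partition_big (@Pj d n) (fun P => partition P [set: ('I_d + 'I_n)%type]))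
    /=; last by move=> j _; exact: preim_partitionP.
  rewrite big_distrr /=; apply: eq_bigr => P _.
  rewrite -mulrA big_distrl; congr (_ * _); apply: eq_bigr => j /eqP <-.
  by [].
have -> : \sum_(j : mindex d n) T j * TP (Pj j) (molecule G) j' = T j' *+ #|G|.
  under eq_bigr do rewrite TP_mol big_distrr.
  rewrite exchange_big /= -sumr_const; apply: eq_bigr => g gG.
  under eq_bigr do rewrite chi_Pj act_eq (fun_if (GRing.mul _)) mulr1 mulr0.
  rewrite -big_mkcond big_pred1_eq.
  by apply: fixT; rewrite groupV.
rewrite -[T j' *+ _]mulr_natl mulrA mulVf ?mul1r //.
by rewrite pnatr_eq0 -lt0n cardG_gt0.
Qed.
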